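(* For $n\ge 0$ let $\mathcal P(n,1,1)$ be the set of lattice paths with steps $(1,1)$ (up) and $(1,-1)$ (down) from $(0,0)$ to $(2n+1,1)$, and let $C_n=\frac{1}{n+1}\binom{2n}{n}$. Define formal power series $f,g,h$ by: - $x\,f(x,y)$ is the sum over all $n\ge0$ and all paths in $\mathcal P(n,1,1)$ starting with an up step of $x^{a}y^{b}$, where $a$ is the number of up steps starting on or below the $x$-axis and $b$ the number of up steps starting above the $x$-axis; - $x\,g(x,y)$ is the sum over all $n\ge0$ and all paths in $\mathcal P(n,1,1)$ starting with a down step of $x^{a}y^{b}$, where $a$ is the number of down steps starting on or below the $x$-axis and $b$ the number of down steps starting above the $x$-axis; - $y\,h(x,y)$ is the sum over all $n\ge0$ and all paths in $\mathcal P(n,1,1)$ of $x^{a}y^{b}$, where, among all vertices except the initial vertex, $a$ is the number lying on or below the $x$-axis and $b$ the number lying above the $x$-axis. Then (1) $f(x,y)=\sum_{n\ge0}C_n\sum_{i=0}^{n}x^iy^{n-i}$; (2) $g(x,y)=\sum_{n\ge0}C_{n+1}\sum_{i=0}^{n}x^iy^{n-i}$; (3) $h(x,y)=\sum_{n\ge0}C_n\sum_{i=0}^{2n}x^iy^{2n-i}$.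
   Context: A step starts on or below (resp. above) the $x$-axis if its initial vertex has $y$-coordinate $\le 0$ (resp. $>0$); a vertex lies on or below (resp. above) the $x$-axis if its $y$-coordinate is $\le0$ (resp. $>0$). *)

(* Defs.v *)
From mathcomp Require Import all_boot all_order all_algebra.
Set Implicit Arguments. Unset Strict Implicit. Unset Printing Implicit Defensive.
Import Order.TTheory GRing.Theory Num.Theory.

(* A lattice path is a sequence of steps: true = up (1,1), false = down (1,-1). *)
Definition step (b : bool) : int := if b then 1%R else (-1)%R.

(* height of the k-th vertex (vertex 0 is the origin) *)
Definition height (s : seq bool) (k : nat) : int :=
  (\sum_(i < k) step (nth false s i))%R.

Definition in_P (n : nat) (s : seq bool) : bool :=
  (size s == 2 * n + 1) && (height s (size s) == 1%R).

(* step i starts at vertex i *)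
Definition up_low (s : seq bool) : nat :=
  count (fun i => nth false s i && (height s i <= 0)%R) (iota 0 (size s)).
Definition up_high (s : seq bool) : nat :=
  count (fun i => nth false s i && (0 < height s i)%R) (iota 0 (size s)).
Definition down_low (s : seq bool) : nat :=
  count (fun i => ~~ nth false s i && (height s i <= 0)%R) (iota 0 (size s)).
Definition down_high (s : seq bool) : nat :=
  count (fun i => ~~ nth false s i && (0 < height s i)%R) (iota 0 (size s)).
(* vertices other than the initial one: vertices 1 .. size s *)
Definition vert_low (s : seq bool) : nat :=
  count (fun k => (height s k <= 0)%R) (iota 1 (size s)).
Definition vert_high (s : seq bool) : nat :=
  count (fun k => (0 < height s k)%R) (iota 1 (size s)).

Definition cntF (n a b : nat) : nat :=
  #|[pred t : (2 * n + 1).-tuple bool | in_P n t && nth false t 0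
        && (up_low t == a) && (up_high t == b)]|.
Definition cntG (n a b : nat) : nat :=
  #|[pred t : (2 * n + 1).-tuple bool | in_P n t && ~~ nth false t 0
        && (down_low t == a) && (down_high t == b)]|.
Definition cntH (n a b : nat) : nat :=
  #|[pred t : (2 * n + 1).-tuple bool | in_P n t
        && (vert_low t == a) && (vert_high t == b)]|.

Definition catalan (n : nat) : nat := 'C(2 * n, n) %/ n.+1.

(* Bivariate formal power series over nat given as a sum over n of terms;
   a term is a coefficient function T n : nat -> nat -> nat (coefficient
   of x^a y^b). *)
Definition series := nat -> nat -> nat -> nat.

(* coefficient of x^a y^b in \sum_n T n is c (the partial sums stabilise) *)
Definition coef_is (T : series) (a b c : nat) : Prop :=
  exists N0, forall N, N0 <= N -> \sum_(n < N) T n a b = c.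

Definition series_eq (T U : series) : Prop :=
  forall a b, exists c, coef_is T a b c /\ coef_is U a b c.

Definition mulx (T : series) : series :=
  fun n a b => if a is a'.+1 then T n a' b else 0.
Definition muly (T : series) : series :=
  fun n a b => if b is b'.+1 then T n a b' else 0.

Definition termF : series := fun n a b =>
  catalan n * \sum_(i < n.+1) ((a == i) && (b == n - i)).
Definition termG : series := fun n a b =>
  catalan n.+1 * \sum_(i < n.+1) ((a == i) && (b == n - i)).
Definition termH : series := fun n a b =>
  catalan n * \sum_(i < (2 * n).+1) ((a == i) && (b == 2 * n - i)).

(* Main.v *)
Require Import Defs.
From mathcomp Require Import all_boot all_order all_algebra zify.
Set Implicit Arguments. Unset Strict Implicit. Unset Printing Implicit Defensive.
Import Order.TTheory GRing.Theory Num.Theory.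

Lemma height_drop s j k : height s (j + k) = (height s j + height (drop j s) k)%R.
Proof.
rewrite /height big_split_ord /=; congr (_ + _)%R.
by apply: eq_bigr => i _; rewrite nth_drop.
Qed.

Lemma height_take s j k : k <= j -> height (take j s) k = height s k.
Proof.
move=> kj; rewrite /height; apply: eq_bigr => i _; rewrite nth_take //.
exact: leq_trans (ltn_ord i) kj.
Qed.

Lemma height_cat_l x y k : k <= size x -> height (x ++ y) k = height x k.
Proof.
move=> kx; rewrite /height; apply: eq_bigr => i _; rewrite nth_cat.
by rewrite (leq_trans (ltn_ord i) kx).
Qed.

Lemma height_cat_r x y k : height (x ++ y) (size x + k) = (height x (size x) + height y k)%R.
Proof.
rewrite height_drop drop_size_cat // height_cat_l //.
Qed.

Definition stat (P : pred bool) (s : seq bool) :=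
  count (fun k => P (nth false s k) && (height s k <= 0)%R) (iota 0 (size s)).
Definition keylow s j m :=
  if j <= m then (height s m <= height s j)%R else (height s m < height s j)%R.
Definition cst P s j :=
  count (fun m => P (nth false s m) && keylow s j m) (iota 0 (size s)).

Lemma stat_rot P s j : j < size s -> height s (size s) = 1%R ->
  stat P (rot j s) = cst P s j.
Proof.
move=> js hN; rewrite /stat /cst size_rot.
set N := size s.
have eN : N = (N - j) + j by rewrite subnK // ltnW.
have eN2 : N = j + (N - j) by rewrite subnKC // ltnW.
have sd : size (drop j s) = N - j by rewrite size_drop.
have hd : height (drop j s) (N - j) = (1 - height s j)%R.
  by move: (height_drop s j (N - j)); rewrite -eN2 hN => ->; rewrite addrC addKr.
rewrite {1}eN iotaD add0n count_cat.
rewrite {3}eN2 iotaD add0n count_cat addnC.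
congr (_ + _).
- have -> : iota (N - j) j = map (addn (N - j)) (iota 0 j) by rewrite -iotaDl addn0.
  rewrite count_map.
  apply: eq_in_count => k; rewrite mem_iota add0n => /andP[_ kj] /=.
  rewrite /rot nth_cat sd ltnNge leq_addr /= addKn nth_take //.
  rewrite -{1}sd height_cat_r sd hd height_take; last exact: ltnW.
  rewrite /keylow leqNgt kj /=; congr (_ && _).
  by apply/idP/idP; lia.
- have -> : iota j (N - j) = map (addn j) (iota 0 (N - j)) by rewrite -iotaDl addn0.
  rewrite count_map.
  apply: eq_in_count => k; rewrite mem_iota add0n => /andP[_ kN] /=.
  rewrite /rot nth_cat sd kN nth_drop height_cat_l; last by rewrite sd ltnW.
  rewrite /keylow leq_addr; congr (_ && _).
  by rewrite height_drop; apply/idP/idP; lia.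
Qed.

Lemma keylow_refl s j : keylow s j j.
Proof. by rewrite /keylow leqnn lexx. Qed.

Lemma keylow_trans s j j' m : keylow s j m -> keylow s j' j -> keylow s j' m.
Proof.
rewrite /keylow; case: (leqP j m) => jm; case: (leqP j' j) => j'j;
  case: (leqP j' m) => j'm; lia.
Qed.

Lemma keylow_total s j m : m != j -> keylow s j m || keylow s m j.
Proof.
rewrite /keylow => /eqP mj; case: (leqP j m) => jm; case: (leqP m j) => mj';
  lia.
Qed.

Lemma count_split (T : Type) (a b : pred T) s :
  count (fun x => a x && b x) s + count (fun x => a x && ~~ b x) s = count a s.
Proof. by elim: s => //= x s <-; case: (a x); case: (b x) => /=; lia. Qed.

Lemma count_nth_iota (P : pred bool) s :
  count (fun k => P (nth false s k)) (iota 0 (size s)) = count P s.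
Proof. by rewrite -{3}(mkseq_nth false s) /mkseq count_map. Qed.

Lemma cst_le (P : pred bool) s j : cst P s j <= count P s.
Proof.
rewrite /cst -count_nth_iota; apply: sub_count => k /=; by case/andP.
Qed.

Lemma cst_gt0 (P : pred bool) s j : j < size s -> P (nth false s j) -> 0 < cst P s j.
Proof.
move=> js Pj; rewrite /cst -has_count; apply/hasP; exists j.
  by rewrite mem_iota.
by rewrite Pj keylow_refl.
Qed.

Lemma count_sub_lt (T : eqType) (a b : pred T) s x :
  subpred a b -> x \in s -> b x -> ~~ a x -> count a s < count b s.
Proof.
move=> ab xs bx ax; rewrite -(count_split b a).
have -> : count (fun y => b y && a y) s = count a s.
  by apply: eq_count => y /=; case ay: (a y); rewrite ?andbT ?andbF // ab.
rewrite -addn1 leq_add2l -has_count; apply/hasP; exists x => //.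
by rewrite bx.
Qed.

Lemma cst_lt (P : pred bool) s j j' : j' < size s -> j != j' -> keylow s j' j ->
  P (nth false s j') -> cst P s j < cst P s j'.
Proof.
move=> j's jj' kl Pj'; rewrite /cst.
apply: (count_sub_lt (x := j')).
- move=> x /= /andP[-> kx]; exact: keylow_trans kx kl.
- by rewrite mem_iota.
- by rewrite /= Pj' keylow_refl.
rewrite /= Pj' /=.
apply/negP => kl2; move/negP: jj'; apply.
move: kl kl2; rewrite /keylow; case: (leqP j' j) => a; case: (leqP j j') => b; lia.
Qed.

Lemma cst_one (P : pred bool) s a : 0 < a <= count P s ->
  count (fun j => P (nth false s j) && (cst P s j == a)) (iota 0 (size s)) = 1.
Proof.
move=> /andP[a0 aM].
set J := filter (fun j => P (nth false s j)) (iota 0 (size s)).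
set L := map (cst P s) J.
have UJ : uniq J := filter_uniq _ (iota_uniq _ _).
have inj : {in J &, injective (cst P s)}.
  move=> j j' Hj Hj'; move: Hj Hj'; rewrite !mem_filter !mem_iota /=.
  move=> /andP[Pj js] /andP[Pj' j's] e.
  apply/eqP; apply/negPn/negP => ne.
  case/orP: (keylow_total s ne) => kl.
    by move: (cst_lt j's ne kl Pj'); rewrite e ltnn.
  have ne' : j' != j by rewrite eq_sym.
  by move: (cst_lt js ne' kl Pj); rewrite e ltnn.
have UL : uniq L by rewrite map_inj_in_uniq.
have sL : size L = count P s by rewrite size_map size_filter count_nth_iota.
have sub : {subset L <= iota 1 (count P s)}.
  move=> x /mapP [j]; rewrite mem_filter mem_iota => /andP[Pj /andP[_ js]] ->.
  rewrite mem_iota add1n ltnS cst_le andbT. exact: cst_gt0.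
have [_ eqL] := uniq_min_size UL sub (eq_leq (etrans (size_iota _ _) (esym sL))).
have : count_mem a L = 1.
  by rewrite count_uniq_mem // eqL mem_iota add1n ltnS a0 aM.
rewrite count_map count_filter => <-.
by apply: eq_count => j /=; rewrite andbC.
Qed.

Lemma height_full s : height s (size s) = (\sum_(x <- s) step x)%R.
Proof. by rewrite (big_nth false) big_mkord. Qed.

Lemma sum_step s : ((\sum_(x <- s) step x) + (size s)%:Z = 2 * (count id s)%:Z)%R.
Proof.
elim: s => [|x s IH]; first by rewrite big_nil.
rewrite big_cons /=; move: IH; set S := (\sum_(x <- s) step x)%R; case: x => /= IH; rewrite /step; lia.
Qed.

Lemma in_P_count n s : in_P n s = (size s == 2 * n + 1) && (count id s == n.+1).
Proof.
rewrite /in_P height_full; case: eqP => //= sz.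
have := sum_step s; rewrite sz; move: (count id s) ((\sum_(x <- s) step x)%R) => c S H; apply/eqP/eqP => H2; lia.
Qed.

Lemma in_P_rot n j s : in_P n (rot j s) = in_P n s.
Proof.
have /permP pr : perm_eq (rot j s) s by rewrite perm_rot perm_refl.
by rewrite !in_P_count size_rot pr.
Qed.

Lemma nth_rot0 j (s : seq bool) : j < size s -> nth false (rot j s) 0 = nth false s j.
Proof. by move=> js; rewrite /rot nth_cat size_drop subn_gt0 js nth_drop addn0. Qed.

Lemma card_sum (T : finType) (p : pred T) : #|[pred x | p x]| = \sum_x p x.
Proof.
rewrite -sum1_card big_mkcond /=; apply: eq_bigr => x _; rewrite inE; by case: (p x).
Qed.

Lemma count_iota_sum (p : pred nat) N : count p (iota 0 N) = \sum_(j < N) p j.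
Proof.
have -> : iota 0 N = index_iota 0 N by rewrite /index_iota subn0.
rewrite -sum1_count big_mkcond big_mkord /=.
by apply: eq_bigr => x _; case: (p x).
Qed.

Lemma double n (P : pred bool) a :
  (forall t : (2 * n + 1).-tuple bool, in_P n t -> 0 < a <= count P t) ->
  #|[pred t : (2 * n + 1).-tuple bool | in_P n t && P (nth false t 0) && (stat P t == a)]|
    * (2 * n + 1)
  = #|[pred t : (2 * n + 1).-tuple bool | in_P n t]|.
Proof.
move=> Ha; rewrite !card_sum.
set N := 2 * n + 1.
have step1 : \sum_(t : N.-tuple bool) in_P n t =
  \sum_(t : N.-tuple bool) \sum_(j < N)
     (in_P n t && (P (nth false t j) && (stat P (rot j t) == a))).
  apply: eq_bigr => t _; case H: (in_P n t) => /=; last by rewrite big1.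
  rewrite -(count_iota_sum (fun j => P (nth false t j) && (stat P (rot j t) == a))).
  rewrite -(cst_one (Ha t H)) size_tuple.
  apply: eq_in_count => j; rewrite mem_iota /= => jN.
  rewrite stat_rot ?size_tuple //.
  by move: H; rewrite /in_P size_tuple => /andP[_ /eqP].
rewrite step1 exchange_big /=.
have step2 : forall j : 'I_N,
  \sum_(t : N.-tuple bool) (in_P n t && (P (nth false t j) && (stat P (rot j t) == a)))
  = \sum_(t : N.-tuple bool) (in_P n t && P (nth false t 0) && (stat P t == a)).
  move=> j.
  have inj : injective (@rot_tuple N j bool).
    by move=> t1 t2 /(congr1 val) /= /rot_inj /val_inj.
  rewrite [RHS](reindex_inj inj); apply: eq_bigr => t _ /=.
  by rewrite in_P_rot nth_rot0 ?size_tuple // andbA.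
rewrite (eq_bigr _ (fun j _ => step2 j)) sum_nat_const card_ord mulnC.
done.
Qed.

Lemma count_tuple_card m (t : m.-tuple bool) : count id t = #|[pred i | tnth t i]|.
Proof.
rewrite -{1}(map_tnth_enum t) count_map -sum1_count big_enum_cond /=.
by rewrite sum1_card.
Qed.

Lemma card_count m k : #|[pred t : m.-tuple bool | count id t == k]| = 'C(m, k).
Proof.
pose f (A : {set 'I_m}) : m.-tuple bool := [tuple (i \in A) | i < m].
pose g (t : m.-tuple bool) : {set 'I_m} := [set i | tnth t i].
have fg : cancel g f.
  by move=> t; apply: eq_from_tnth => i; rewrite tnth_mktuple inE.
have gf : cancel f g.
  by move=> A; apply/setP => i; rewrite inE tnth_mktuple.
have bf : bijective f by exists g.
rewrite card_sum (reindex f (onW_bij _ bf)).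
rewrite -[in RHS](card_ord m) -card_draws.
have -> : #|[set A : {set 'I_m} | #|A| == k]| = \sum_(A : {set 'I_m}) (#|A| == k).
  by rewrite -card_sum; apply: eq_card => A; rewrite !inE.
apply: eq_bigr => A _.
rewrite count_tuple_card.
suff -> : #|[pred i | tnth (f A) i]| = #|A| by [].
by apply: eq_card => i; rewrite !inE tnth_mktuple.
Qed.

Lemma cat_eq n X : X * (2 * n + 1) = 'C(2 * n + 1, n.+1) -> X = catalan n.
Proof.
move=> H; have := mul_bin_diag (2 * n + 1) n.
rewrite addn1 /= -addn1 -H mulnC mulnA => /eqP.
rewrite eqn_mul2r addn1 /= /catalan => /eqP ->.
by rewrite mulnC mulnK.
Qed.

Lemma mainP n (P : pred bool) a M :
  (forall t : (2 * n + 1).-tuple bool, in_P n t -> count P t = M) -> 0 < a <= M ->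
  #|[pred t : (2 * n + 1).-tuple bool | in_P n t && P (nth false t 0) && (stat P t == a)]|
  = catalan n.
Proof.
move=> HM aM; apply: cat_eq; rewrite double; last by move=> t /HM ->.
rewrite -card_count; apply: eq_card => t; by rewrite !inE in_P_count size_tuple eqxx.
Qed.

Lemma stat_split (P : pred bool) s :
  stat P s + count (fun k => P (nth false s k) && (0 < height s k)%R) (iota 0 (size s))
  = count P s.
Proof.
rewrite /stat -count_nth_iota -(count_split (fun k => P (nth false s k)) (fun k => (height s k <= 0)%R)).
congr (_ + _); apply: eq_count => k /=; by rewrite ltNge.
Qed.

Lemma stat_gt0 (P : pred bool) s : 0 < size s -> P (nth false s 0) -> 0 < stat P s.
Proof.
move=> s0 P0; rewrite /stat -has_count; apply/hasP; exists 0.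
  by rewrite mem_iota.
by rewrite /= P0 /height big_ord0.
Qed.

Lemma stat_le (P : pred bool) s : stat P s <= count P s.
Proof. by rewrite -(stat_split P s) leq_addr. Qed.

Lemma count_up n (t : seq bool) : in_P n t -> count id t = n.+1.
Proof. by rewrite in_P_count => /andP[_ /eqP]. Qed.

Lemma count_down n (t : seq bool) : in_P n t -> count negb t = n.
Proof.
move=> H; have := count_predC id t; rewrite (count_up H).
move: H; rewrite in_P_count => /andP[/eqP -> _].
have -> : count (predC id) t = count negb t by [].
lia.
Qed.

Lemma F_val n a b : cntF n a b = if (0 < a) && (a + b == n.+1) then catalan n else 0.
Proof.
rewrite /cntF; case: ifP => [/andP[a0 /eqP ab]|H].
  rewrite -(@mainP n id a n.+1); last 2 first.
  - by move=> t /count_up.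
  - by rewrite a0 -ab leq_addr.
  apply: eq_card => t; rewrite !inE.
  case Ht: (in_P n t) => //=; case: (nth false t 0) => //=.
  have := stat_split id t; rewrite (count_up Ht) /up_high /up_low /stat /= => sp.
  case: eqP => //= ua; apply/eqP; lia.
apply: eq_card0 => t; rewrite !inE.
apply/negP => /andP[/andP[/andP[Ht t0] /eqP ua] /eqP ub]; move/negP: H; apply.
have := stat_split id t; rewrite (count_up Ht) /up_high /up_low /stat /= => sp.
have : 0 < stat id t by apply: stat_gt0 => //; rewrite size_tuple addn1.
rewrite /stat /= => pos.
apply/andP; split; first by rewrite -ua.
rewrite -ua -ub /up_low /up_high; apply/eqP; lia.
Qed.

Lemma G_val n a b : cntG n a b = if (0 < a) && (a + b == n) then catalan n else 0.
Proof.
rewrite /cntG; case: ifP => [/andP[a0 /eqP ab]|H].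
  rewrite -(@mainP n negb a n); last 2 first.
  - by move=> t /count_down.
  - by rewrite a0 -ab leq_addr.
  apply: eq_card => t; rewrite !inE.
  case Ht: (in_P n t) => //=; case: (nth false t 0) => //=.
  have := stat_split negb t; rewrite (count_down Ht) /down_high /down_low /stat /= => sp.
  case: eqP => //= ua; apply/eqP; lia.
apply: eq_card0 => t; rewrite !inE.
apply/negP => /andP[/andP[/andP[Ht t0] /eqP ua] /eqP ub]; move/negP: H; apply.
have := stat_split negb t; rewrite (count_down Ht) /down_high /down_low /stat /= => sp.
have : 0 < stat negb t by apply: stat_gt0 => //; rewrite size_tuple addn1.
rewrite /stat /= => pos.
apply/andP; split; first by rewrite -ua.
rewrite -ua -ub /down_low /down_high; apply/eqP; lia.
Qed.

Lemma vert_stat s : 0 < size s -> height s (size s) = 1%R ->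
  stat predT s = (vert_low s).+1.
Proof.
case: s => // x s' _; set s := x :: s'; move=> hN.
have e1 : iota 0 (size s) = 0 :: iota 1 (size s') by [].
have e2 : iota 1 (size s) = iota 1 (size s') ++ [:: size s].
  rewrite (_ : size s = size s' + 1); last by rewrite addn1.
  by rewrite iotaD /= add1n addn1.
rewrite /stat /vert_low e1 e2 count_cat /= hN /height big_ord0.
by rewrite lexx (_ : ((1:int) <= 0)%R = false) //= !addn0 add1n.
Qed.

Lemma vert_split s : vert_low s + vert_high s = size s.
Proof.
have := count_predC (fun k => (height s k <= 0)%R) (iota 1 (size s)).
rewrite size_iota => <-; rewrite /vert_low /vert_high.
congr (_ + _); apply: eq_count => k /=; by rewrite ltNge.
Qed.

Lemma in_P_vert n (t : (2 * n + 1).-tuple bool) : in_P n t ->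
  stat predT t = (vert_low t).+1 /\ vert_low t + vert_high t = 2 * n + 1.
Proof.
move=> Ht; split; last by rewrite vert_split size_tuple.
apply: vert_stat; first by rewrite size_tuple addn1.
by move: Ht; rewrite /in_P => /andP[_ /eqP].
Qed.

Lemma H_val n a b :
  cntH n a b = if (a + b == 2 * n + 1) && (a < 2 * n + 1) then catalan n else 0.
Proof.
rewrite /cntH; case: ifP => [/andP[/eqP ab aN]|H].
  rewrite -(@mainP n predT a.+1 (2 * n + 1)); last 2 first.
  - by move=> t _; rewrite count_predT size_tuple.
  - by [].
  apply: eq_card => t; rewrite !inE.
  case Ht: (in_P n t) => //=; have [e1 e2] := in_P_vert Ht.
  rewrite e1 eqSS; case: eqP => //= ua; apply/eqP; lia.
apply: eq_card0 => t; rewrite !inE.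
apply/negP => /andP[/andP[Ht /eqP ua] /eqP ub]; move/negP: H; apply.
have [e1 e2] := in_P_vert Ht.
have := stat_le predT t; rewrite count_predT size_tuple e1 => le.
apply/andP; split; first by apply/eqP; lia.
by rewrite -ua.
Qed.

Lemma sum_pick m (a' : nat) (Q : nat -> bool) :
  \sum_(i < m) ((a' == (i : nat)) && Q i) = (a' < m) && Q a'.
Proof.
elim: m => [|m IH]; first by rewrite big_ord0.
rewrite big_ord_recr /= IH.
case: (ltngtP a' m) => h.
- by rewrite ltnS (ltnW h) /= addn0.
- by rewrite ltnS leqNgt h.
- by rewrite h ltnSn /= add0n.
Qed.

Lemma coef_bound' (T : series) a b K N :
  (forall n, K <= n -> T n a b = 0) -> K <= N ->
  \sum_(n < N) T n a b = \sum_(n < K) T n a b.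
Proof.
move=> HK KN.
rewrite -(subnKC KN) big_split_ord /= [X in _ + X]big1 ?addn0 // => i _.
by apply: HK; rewrite leq_addr.
Qed.

Lemma coef_bound (T : series) a b K :
  (forall n, K <= n -> T n a b = 0) -> coef_is T a b (\sum_(n < K) T n a b).
Proof. by move=> HK; exists K => N KN; apply: coef_bound'. Qed.

Lemma series_eq_same (T U : series) :
  (forall n a b, T n a b = U n a b) ->
  (forall a b, exists K, forall n, K <= n -> T n a b = 0) -> series_eq T U.
Proof.
move=> TU HK a b; have [K HKab] := HK a b.
exists (\sum_(n < K) T n a b); split; first exact: coef_bound.
have -> : \sum_(n < K) T n a b = \sum_(n < K) U n a b by apply: eq_bigr.
by apply: coef_bound => n /HKab; rewrite TU.
Qed.

Lemma series_eq_shift (T U : series) :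
  (forall a b, T 0 a b = 0) -> (forall n a b, T n.+1 a b = U n a b) ->
  (forall a b, exists K, forall n, K <= n -> U n a b = 0) -> series_eq T U.
Proof.
move=> T0 TU HK a b; have [K HKab] := HK a b.
exists (\sum_(n < K) U n a b); split; last exact: coef_bound.
exists K.+1 => N KN; case: N KN => // N KN.
rewrite big_ord_recl T0 add0n.
rewrite -(coef_bound' HKab KN).
by apply: eq_bigr => i _; rewrite TU.
Qed.

Lemma bool_tac (x y : bool) : (x -> y) -> (y -> x) -> x = y.
Proof. by case: x; case: y => // H1 H2; [have := H1 isT | have := H2 isT]. Qed.

Theorem theorem10 :
  series_eq cntF (mulx termF) /\
  series_eq cntG (mulx termG) /\
  series_eq cntH (muly termH).
Proof.
split; [|split].
- apply: series_eq_same.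
    move=> n [|a'] b; rewrite F_val /mulx /termF //.
    rewrite (sum_pick _ _ (fun i => b == n - i)).
    have -> : (0 < a'.+1) && (a'.+1 + b == n.+1) = (a' < n.+1) && (b == n - a').
      by apply: bool_tac => /andP[h1 /eqP h2]; apply/andP; split => //; apply/eqP; lia.
    by case: ifP => _; rewrite ?muln1 ?muln0.
  move=> a b; exists (a + b).+1 => n hn; rewrite F_val.
  have -> : (a + b == n.+1) = false by apply/negbTE/eqP; lia.
  by rewrite andbF.
- apply: series_eq_shift.
  + by move=> a b; rewrite G_val; case: a => //= a; rewrite addSn.
  + move=> n [|a'] b; rewrite G_val /mulx /termG //.
    rewrite (sum_pick _ _ (fun i => b == n - i)).
    have -> : (0 < a'.+1) && (a'.+1 + b == n.+1) = (a' < n.+1) && (b == n - a').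
      by apply: bool_tac => /andP[h1 /eqP h2]; apply/andP; split => //; apply/eqP; lia.
    by case: ifP => _; rewrite ?muln1 ?muln0.
  + move=> a b; exists (a + b) => n; case: a => [|a'] hn //.
    rewrite /mulx /termG (sum_pick _ _ (fun i => b == n - i)).
    have -> : (b == n - a') = false by apply/negbTE/eqP; lia.
    by rewrite andbF muln0.
- apply: series_eq_same.
    move=> n a [|b']; rewrite H_val /muly /termH.
      have -> : (a + 0 == 2 * n + 1) && (a < 2 * n + 1) = false.
        by apply/negbTE/negP => /andP[/eqP h1 h2]; lia.
      by [].
    rewrite (sum_pick _ _ (fun i => b' == 2 * n - i)).
    have -> : (a + b'.+1 == 2 * n + 1) && (a < 2 * n + 1) = (a < (2 * n).+1) && (b' == 2 * n - a).
      by apply: bool_tac => /andP[h1 /eqP h2]; apply/andP; split; try apply/eqP; lia.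
    by case: ifP => _; rewrite ?muln1 ?muln0.
  move=> a b; exists (a + b).+1 => n hn; rewrite H_val.
  by have -> : (a + b == 2 * n + 1) = false by apply/negbTE/eqP; lia.
Qed.
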